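(* For every $k$-regular graph $G$, $\mu(G)\ge k/2$.
   Context: All graphs are finite and simple. For a graph $G=(V,E)$ on $n$ vertices, a fractional vertex cover is a function $f:V\to[0,\infty)$ with $f(u)+f(v)\ge 1$ for every edge $uv\in E$; $\tau^*(G)$ denotes the minimum of $\sum_{v\in V}f(v)$ over all fractional vertex covers. For $E'\subseteq E$ let $G-E'=(V,E\setminus E')$. Define $\mu(G)=\min\{|E'| : E'\subseteq E,\ \tau^*(G-E')<n/2\}$. *)

(* Defs.v *)
From mathcomp Require Import all_boot all_order all_algebra.
From mathcomp Require Import all_classical all_reals.
Set Implicit Arguments. Unset Strict Implicit. Unset Printing Implicit Defensive.
Import Order.TTheory GRing.Theory Num.Theory.

Local Open Scope ring_scope.

Section Graphs.
Variable T : finType.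

Definition simple_graph (e : rel T) : Prop := symmetric e /\ irreflexive e.

Definition edges (e : rel T) : {set {set T}} :=
  [set A : {set T} | [exists u, exists v, e u v && (A == [set u; v])]].

Definition remove_edges (e : rel T) (E' : {set {set T}}) : rel T :=
  fun u v => e u v && ([set u; v] \notin E').

Definition k_regular (e : rel T) (k : nat) : Prop :=
  forall v : T, #|[set u | e v u]| = k.

Definition frac_vertex_cover (R : realType) (e : rel T) (f : T -> R) : Prop :=
  (forall v, 0 <= f v) /\ (forall u v, e u v -> 1 <= f u + f v).

Definition tau_star (R : realType) (e : rel T) : R :=
  inf [set x : R | exists f : T -> R, frac_vertex_cover e f /\ x = \sum_(v : T) f v]%classic.

(* The sets E' over which mu(G) minimises. *)
Definition mu_candidate (R : realType) (e : rel T) (E' : {set {set T}}) : Prop :=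
  E' \subset edges e /\ tau_star R (remove_edges e E') < #|T|%:R / 2.

End Graphs.

(* Main.v *)
Require Import Defs.
From mathcomp Require Import all_boot all_order all_algebra.
From mathcomp Require Import all_classical all_reals.
From mathcomp Require Import lra zify.
Import Order.TTheory GRing.Theory Num.Theory.
Local Open Scope ring_scope.
Lemma exmin (R : realDomainType) (T : finType) (g : T -> R) v0 : g v0 != 0 ->
  exists v1, g v1 != 0 /\ forall v, g v != 0 -> `|g v1| <= `|g v|.
Proof.
move=> H.
case: (@arg_minP _ R T v0 (fun v => g v != 0) (fun v => `|g v|) H) => v1 H1 H2.
by exists v1.
Qed.

Lemma key (R : realFieldType) (T : finType) (h : rel T) :
  (forall A : {set T}, #|A| <= #|[set w | [exists u in A, h u w]]|)%N ->
  forall n (g : T -> R), (#|[set v | g v != 0%R]| <= n)%N ->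
  (forall u v, h u v -> 0 <= g u + g v) -> 0 <= \sum_v g v.
Proof.
move=> hall n; elim: n => [|n IH] g Hn Hg.
  rewrite big1 // => v _; apply/eqP; apply: contraT => Hv.
  move: Hn; rewrite leqn0 cards_eq0 => /eqP Hs.
  have : v \in [set v | g v != 0] by rewrite inE.
  by rewrite Hs inE.
case: (pickP [pred v | g v != 0]) => [v0 Hv0 | none]; last first.
  by rewrite big1 // => v _; have := none v => /= /negbFE /eqP.
have [v1 [Hv1 Hmin]] := @exmin R T g v0 Hv0.
set c := `|g v1|.
have cpos : 0 < c by rewrite normr_gt0.
pose g' v := if 0 < g v then g v - c else if g v < 0 then g v + c else 0.
have cls : forall v, [\/ g v = 0 /\ g' v = 0,
     [/\ 0 < g v, g' v = g v - c & c <= g v] |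
     [/\ g v < 0, g' v = g v + c & c <= - g v]].
  move=> v; rewrite /g'.
  case: (ltrgtP 0 (g v)) => Hg0.
  - apply: Or32; split => //.
    by have := Hmin v; rewrite (gtr0_norm Hg0) => ->; rewrite // gt_eqF.
  - apply: Or33; split => //.
    by have := Hmin v; rewrite (ltr0_norm Hg0) => ->; rewrite // lt_eqF.
  - by apply: Or31; split.
have Hn' : (#|[set v | g' v != 0%R]| <= n)%N.
  have sub : [set v | g' v != 0] \subset [set v | g v != 0] :\ v1.
    apply/fintype.subsetP => v; rewrite !inE => Hv.
    have [[-> E]|[Hp E _]|[Hp E _]] := cls v; first by rewrite E eqxx in Hv.
    - rewrite gt_eqF // andbT; apply/eqP => Ev; subst v.
      by move: Hv; rewrite E /c (gtr0_norm Hp) subrr eqxx.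
    - rewrite lt_eqF // andbT; apply/eqP => Ev; subst v.
      by move: Hv; rewrite E /c (ltr0_norm Hp) addrN eqxx.
  apply: leq_trans (subset_leq_card sub) _.
  have := cardsD1 v1 [set v | g v != 0]; rewrite inE Hv1 add1n => E.
  by move: Hn; rewrite E ltnS.
have Hg' : forall u v, h u v -> 0 <= g' u + g' v.
  move=> u v Huv; have := Hg u v Huv.
  by have [[Hu Eu]|[Hu Eu Cu]|[Hu Eu Cu]] := cls u;
     have [[Hv Ev]|[Hv Ev Cv]|[Hv Ev Cv]] := cls v;
     rewrite Eu Ev; try rewrite Hu; try rewrite Hv; lra.
have IH' := IH g' Hn' Hg'.
pose P := [set v | 0 < g v]; pose Nn := [set v | g v < 0].
have split : \sum_v g v = \sum_v g' v + c * (#|P|%:R - #|Nn|%:R).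
  have E : forall v, g v = g' v + c * ((v \in P)%:R - (v \in Nn)%:R).
    move=> v; rewrite !inE.
    have [[Hv Ev]|[Hv Ev Cv]|[Hv Ev Cv]] := cls v.
    - by rewrite Hv Ev ltxx /=; lra.
    - by rewrite Hv Ev (lt_gtF Hv) /=; lra.
    - by rewrite Hv Ev (lt_gtF Hv) /=; lra.
  rewrite (eq_bigr _ (fun v _ => E v)) big_split /= -mulr_sumr sumrB.
  congr (_ + c * (_ - _)).
    by rewrite -sum1_card natr_sum [in RHS]big_mkcond /=; apply: eq_bigr => v _; case: (v \in P).
  by rewrite -sum1_card natr_sum [in RHS]big_mkcond /=; apply: eq_bigr => v _; case: (v \in Nn).
have card : (#|Nn| <= #|P|)%N.
  apply: leq_trans (hall Nn) _; apply: subset_leq_card.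
  apply/fintype.subsetP => w; rewrite !inE => /existsP [u /andP [Hu Huw]].
  move: Hu; rewrite inE => Hu; have := Hg u w Huw; lra.
rewrite split; apply: addr_ge0 => //; apply: mulr_ge0; first exact: ltW.
by rewrite subr_ge0 ler_nat.
Qed.

Local Close Scope ring_scope.
Lemma pairs_le (T : finType) (e : rel T) (E' : {set {set T}}) :
  irreflexive e ->
  (#|[set p : T * T | e p.1 p.2 && ([set p.1; p.2] \in E')]| <= 2 * #|E'|)%N.
Proof.
move=> irr.
set Q := [set p : T * T | _].
pose r (x : T) : nat := enum_rank x.
pose phi (p : T * T) := ([set p.1; p.2], (r p.1 < r p.2)%N).
have inj : {in Q &, injective phi}.
  move=> [p1 p2] [q1 q2]; rewrite !inE /= => /andP [ep _] /andP [eq _].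
  rewrite /phi /= => [[Es Eb]].
  have np : p1 != p2 by apply: contraTneq ep => ->; rewrite irr.
  have nq : q1 != q2 by apply: contraTneq eq => ->; rewrite irr.
  have rinj : forall x y, r x = r y -> x = y.
    by move=> x y /val_inj /enum_rank_inj.
  have : p1 \in [set q1; q2] by rewrite -Es set21.
  have : p2 \in [set q1; q2] by rewrite -Es set22.
  move=> /set2P [] E2 /set2P [] E1; subst.
  - by rewrite eqxx in np.
  - exfalso; move: Eb.
    have : r q1 != r q2 by apply: contra nq => /eqP /rinj ->.
    rewrite /r; lia.
  - by [].
  - by rewrite eqxx in np.
rewrite -(card_in_imset inj).
apply: (@leq_trans #|finset.setX E' [set: bool]|).
  apply: subset_leq_card; apply/fintype.subsetP => x /imsetP [p Hp ->].
  by move: Hp; rewrite !inE /= => /andP [_ ->].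
by rewrite cardsX cardsT card_bool mulnC.
Qed.
Lemma hall_H (T : finType) (e : rel T) (k : nat) (E' : {set {set T}}) :
  simple_graph e -> k_regular e k -> (2 * #|E'| < k)%N ->
  forall A : {set T},
  (#|A| <= #|[set w | [exists u in A, remove_edges e E' u w]]|)%N.
Proof.
move=> [sym irr] reg lt A.
set N := [set w | _].
set h := remove_edges e E'.
pose Ein u w := e u w && ([set u; w] \in E').
have deg : forall u, k = (\sum_w h u w + \sum_w Ein u w)%N.
  move=> u; rewrite -big_split /= -(reg u) -sum1dep_card big_mkcond /=.
  apply: eq_bigr => w _; rewrite /h /remove_edges /Ein.
  by case: (e u w); case: ([set u; w] \in E').
have Hh : (\sum_(u in A) \sum_w h u w <= #|N| * k)%N.
  rewrite exchange_big /= -sum_nat_const [in X in (_ <= X)%N]big_mkcond /=.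
  apply: leq_sum => w _.
  case: (boolP (w \in N)) => Hw.
    rewrite -(reg w) -sum1dep_card.
    apply: (@leq_trans (\sum_u h u w)).
      by rewrite big_mkcond /=; apply: leq_sum => u _; case: (u \in A).
    rewrite [in X in (_ <= X)%N]big_mkcond /=; apply: leq_sum => u _; rewrite /h /remove_edges (sym w u).
    by case: (e u w) => /=; case: ([set u; w] \notin E').
  rewrite big1 // => u Hu; apply/eqP; rewrite eqb0; apply: contra Hw => Huw.
  by rewrite inE; apply/existsP; exists u; rewrite Hu.
have He : (\sum_(u in A) \sum_w Ein u w <= 2 * #|E'|)%N.
  apply: (@leq_trans (\sum_u \sum_w Ein u w)).
    by rewrite big_mkcond /=; apply: leq_sum => u _; case: (u \in A).
  rewrite pair_big /=.
  apply: (leq_trans _ (@pairs_le _ _ E' irr)).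
  rewrite -sum1dep_card [in X in (_ <= X)%N]big_mkcond /=.
  by apply: leq_sum => p _; rewrite /Ein; case: (e p.1 p.2 && ([set p.1; p.2] \in E')).
have : (k * #|A| <= #|N| * k + 2 * #|E'|)%N.
  rewrite mulnC -sum_nat_const (eq_bigr _ (fun u _ => deg u)) big_split /=.
  exact: leq_add.
nia.
Qed.

Local Open Scope ring_scope.

Theorem lemma23 (R : realType) (T : finType) (e : rel T) (k : nat) :
  simple_graph e -> k_regular e k ->
  forall E' : {set {set T}}, mu_candidate R e E' ->
  (k%:R / 2 : R) <= (#|E'|)%:R.
Proof.
move=> sg reg E' [sub lt].
rewrite leNgt; apply/negP => H.
have H2 : (2 * #|E'| < k)%N.
  rewrite -(ltr_nat R) natrM; move: H; lra.
have hall := @hall_H _ _ _ _ sg reg H2.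
move: lt; apply/negP; rewrite -leNgt.
apply: lb_le_inf.
  exists (\sum_(v : T) (1 : R)), (fun => 1); split => //; split => // u v _.
  lra.
move=> x [f [[f0 fc] ->]].
have := @key R T (remove_edges e E') hall #|T| (fun v => f v - 1/2) (max_card _).
have fc' : forall u v, remove_edges e E' u v -> 0 <= (f u - 1/2) + (f v - 1/2).
  move=> u v /fc; lra.
move/(_ fc'); rewrite sumrB sumr_const.
rewrite -mulr_natr; lra.
Qed.
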